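(* Let $n\ge1$ and let $\mathbb{F}$ be a field of characteristic $0$ or of odd prime characteristic $p$. In the group algebra $\mathbb{F}(SD_{8n})$: (i) the set $$\{a^{2k}-a^{-2k},\ (a^{2k}-a^{-2k})b\mid 1\le k\le n-1\}\cup\{a^{2k+1}-a^{2n-(2k+1)},\ (a^{2k+1}-a^{2n-(2k+1)})b\mid -\lfloor\tfrac n2\rfloor\le k\le\lfloor\tfrac n2\rfloor-1\}$$ is an $\mathbb{F}$-basis of $\bar{C}(b)$; (ii) the set $$\{a^{2k}-a^{-2k},\ a(a^{2k}-a^{-2k})b\mid 1\le k\le n-1\}\cup\{a^{2k+1}-a^{2n-(2k+1)},\ a(a^{2k+1}-a^{2n-(2k+1)})b\mid -\lfloor\tfrac n2\rfloor\le k\le\lfloor\tfrac n2\rfloor-1\}$$ is an $\mathbb{F}$-basis of $\bar{C}(ab)$.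
   Context: $SD_{8n}=\langle a,b\mid a^{4n}=b^2=1,\ bab=a^{2n-1}\rangle$ is the semi-dihedral group of order $8n$, with elements $a^ib^j$, $0\le i\le 4n-1$, $0\le j\le1$ (exponents of $a$ are taken modulo $4n$); $\mathbb{F}(SD_{8n})$ is its group algebra. For $\beta$ in the group algebra, the anti-centralizer is $\bar{C}(\beta)=\{\alpha\mid\alpha\beta=-\beta\alpha\}$, an $\mathbb{F}$-subspace. $\lfloor x\rfloor$ is the floor function. *)

(* Defs.v *)
From HB Require Import structures.
From mathcomp Require Import all_boot all_order all_algebra.
Set Implicit Arguments. Unset Strict Implicit. Unset Printing Implicit Defensive.
Import GRing.Theory.
Local Open Scope ring_scope.

(* Elements of SD_{8n}: pairs (i, j) standing for a^i b^j,
   0 <= i < 4n (the index type is 'I_(4n).-1.+1, equal to 'I_(4n) for n >= 1),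
   j : bool. *)
Definition sdE (n : nat) : finType := ('I_(4 * n).-1.+1 * bool)%type.

Definition sdel (n : nat) (i : int) (j : bool) : sdE n :=
  (inord `|(i %% (4 * n)%:Z)%Z|%N, j).

(* Group law:  a^i b^j * a^k b^l = a^(i + k (2n-1)^j) b^(j+l)
   (from b a b = a^(2n-1), b^2 = 1). *)
Definition sdmul (n : nat) (g h : sdE n) : sdE n :=
  ((inord ((g.1 + h.1 * (if g.2 then (2 * n).-1 else 1)) %% (4 * n))%N),
   (g.2 (+) h.2)).

Definition galg (F : fieldType) (n : nat) := {ffun sdE n -> F^o}.

Definition gmul (F : fieldType) (n : nat) (x y : galg F n) : galg F n :=
  [ffun g => \sum_(h : sdE n) \sum_(k : sdE n | sdmul h k == g) x h * y k].

Definition gel (F : fieldType) (n : nat) (i : int) (j : bool) : galg F n :=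
  [ffun g => (g == sdel n i j)%:R].

Definition acent (F : fieldType) (n : nat) (beta alpha : galg F n) : Prop :=
  gmul alpha beta = - gmul beta alpha.

Definition is_acent_basis (F : fieldType) (n : nat) (beta : galg F n)
    (X : seq (galg F n)) : Prop :=
  free X /\ (forall alpha : galg F n, alpha \in <<X>>%VS <-> acent beta alpha).

Definition even_range (n : nat) : seq int := [seq k%:Z | k <- iota 1 (n - 1)].
(* -floor(n/2) <= k <= floor(n/2) - 1 *)
Definition odd_range (n : nat) : seq int :=
  [seq j%:Z - (n./2)%:Z | j <- iota 0 (2 * n./2)].

Definition ev_elt (F : fieldType) (n : nat) (k : int) : galg F n :=
  gel F n (2 * k) false - gel F n (- (2 * k)) false.
Definition od_elt (F : fieldType) (n : nat) (k : int) : galg F n :=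
  gel F n (2 * k + 1) false - gel F n ((2 * n)%:Z - (2 * k + 1)) false.

(* Main.v *)
Require Import Defs.
From HB Require Import structures.
From mathcomp Require Import all_boot all_order all_algebra zify.
Set Implicit Arguments. Unset Strict Implicit. Unset Printing Implicit Defensive.
Import Order.TTheory GRing.Theory Num.Theory.
Local Open Scope ring_scope.

Section Gen.
Variables (F : fieldType) (T : finType) (c : T -> T).
Definition ee (g : T) : {ffun T -> F^o} := [ffun x => (x == g)%:R].

Lemma span_ind (X : seq {ffun T -> F^o}) (P : {ffun T -> F^o} -> Prop) :
  P 0 -> (forall a u v, P u -> P v -> P (a *: u + v)) -> (forall x, x \in X -> P x) ->
  forall v, v \in <<X>>%VS -> P v.
Proof.
move=> P0 PD PX v; rewrite -{1}[X]in_tupleE => /coord_span ->.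
apply: (big_ind P) => //.
  by move=> u w Pu Pw; rewrite -[u]scale1r; apply: PD.
move=> i _; rewrite -[_ *: _]addr0; apply: PD => //; apply: PX.
by rewrite mem_nth // size_tuple.
Qed.

Lemma sum_ind1 (R : seq T) (f : T -> F) h : uniq R ->
  \sum_(r <- R) f r * (h == r)%:R = (h \in R)%:R * f h.
Proof.
elim: R => [|x R IH]; first by rewrite big_nil in_nil mul0r.
rewrite big_cons /= in_cons => /andP[xR uR]; rewrite IH //.
have [->|hx] := eqVneq h x.
  by rewrite (negPf xR) /= mul0r addr0 mulr1 mul1r.
by rewrite /= mulr0 add0r.
Qed.

Hypothesis cK : involutive c.
Let X R := [seq ee r - ee (c r) | r <- R].

Lemma span_out R v : v \in <<X R>>%VS -> forall h, h \notin R -> c h \notin R -> v h = 0.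
Proof.
move=> vX h hR chR; move: v vX; apply: span_ind.
- by rewrite ffunE.
- by move=> a u w Pu Pw; rewrite !ffunE Pu Pw scaler0 addr0.
move=> x /mapP[r rR ->]; rewrite !ffunE.
have -> : (h == r) = false by apply/negP => /eqP E; rewrite E rR in hR.
have -> : (h == c r) = false.
  by apply/negP => /eqP E; rewrite E cK rR in chR.
by rewrite subrr.
Qed.

Lemma span_anti R v : v \in <<X R>>%VS -> forall h, v (c h) = - v h.
Proof.
move=> vX h; move: v vX; apply: span_ind.
- by rewrite !ffunE oppr0.
- by move=> a u w Pu Pw; rewrite !ffunE Pu Pw scalerN opprD.
move=> x /mapP[r rR ->]; rewrite !ffunE.
rewrite (inj_eq (can_inj cK)) -{1}[r]cK (inj_eq (can_inj cK)).
by rewrite opprB.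
Qed.

Hypothesis two : (2 != 0 :> F).

Lemma anti_basis (R : seq T) : uniq R ->
  (forall r r', r \in R -> r' \in R -> r != c r') ->
  (forall h, c h != h -> (h \in R) || (c h \in R)) ->
  free (X R) /\ (forall v, v \in <<X R>>%VS <-> (forall h, v (c h) = - v h)).
Proof.
move=> uR H2 H3; split.
  elim: R uR H2 {H3} => [|r R IH] /=; first by move=> *; exact: nil_free.
  move=> /andP[rR uR] H2; rewrite free_cons IH ?andbT //; last first.
    by move=> x y xR yR; apply: H2; rewrite in_cons ?xR ?yR orbT.
  apply/negP => /span_out /(_ r rR).
  have crR : c r \notin R.
    apply/negP => crR; have := H2 r (c r); rewrite in_cons eqxx in_cons crR orbT.
    by rewrite cK eqxx => /(_ isT isT).
  move=> /(_ crR); rewrite !ffunE eqxx.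
  have -> : (r == c r) = false.
    by apply/negbTE/H2; rewrite in_cons eqxx.
  by rewrite subr0 => /eqP; rewrite oner_eq0.
move=> v; split; first by move/span_anti.
move=> Hv.
have -> : v = \sum_(r <- R) v r *: (ee r - ee (c r)).
  apply/ffunP => h; rewrite sum_ffunE.
  under eq_bigr do rewrite !ffunE.
  have E i : v i *: ((h == i)%:R - (h == c i)%:R : F^o) = v i * (h == i)%:R - v i * (h == c i)%:R :> F.
    exact: mulrBr.
  under eq_bigr do rewrite E.
  rewrite sumrB sum_ind1 //.
  under eq_bigr do rewrite -{1}[h]cK (inj_eq (can_inj cK)).
  rewrite sum_ind1 //.
  have [hR|hR] := boolP (h \in R).
    have chR : c h \notin R.
      by apply/negP => chR; have := H2 h (c h) hR chR; rewrite cK eqxx.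
    by rewrite (negPf chR) mul0r subr0 mul1r.
  have [chR|chR] := boolP (c h \in R).
    by rewrite mul0r mul1r sub0r Hv opprK.
  have fix1 : c h = h by apply/eqP; apply: contraNT hR => /H3; rewrite (negPf chR) orbF.
  have : 2 * v h = 0 by rewrite mulr2n mulrDl mul1r -{1}fix1 Hv addNr.
  move/eqP; rewrite mulf_eq0 (negPf two) /= => /eqP ->. by rewrite !(mul0r, mulr0, subr0).
rewrite big_seq; apply: memv_suml => r rR; apply: memvZ; apply: memv_span.
by rewrite /X; apply: map_f.
Qed.
End Gen.

Section SD.
Variables (n : nat) (hn : (0 < n)%N).

Local Notation N := (4 * n)%N.

Lemma NE : (4 * n).-1.+1 = (4 * n)%N.
Proof. by rewrite prednK // muln_gt0 hn. Qed.

Lemma Npos : (0 < (4 * n)%:Z).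
Proof. by rewrite ltz_nat muln_gt0 hn. Qed.

Lemma modN_ge0 i : 0 <= (i %% (4 * n)%:Z)%Z.
Proof. by apply: modz_ge0; rewrite lt0r_neq0 ?Npos. Qed.

Lemma modN_lt i : (`|(i %% (4 * n)%:Z)%Z| < (4 * n).-1.+1)%N.
Proof.
rewrite NE -ltz_nat gez0_abs ?modN_ge0 //; exact: ltz_pmod Npos.
Qed.

Lemma val_sdel i j : ((sdel n i j).1 : nat) = `|(i %% (4 * n)%:Z)%Z|%N.
Proof. by rewrite /sdel /= inordK // modN_lt. Qed.

Lemma sdel_eq i i' j : (i %% (4*n)%:Z)%Z = (i' %% (4*n)%:Z)%Z -> sdel n i j = sdel n i' j.
Proof. by rewrite /sdel => ->. Qed.

Lemma sdel_cong i i' q j : i - i' = q * (4 * n)%:Z -> sdel n i j = sdel n i' j.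
Proof.
move=> E; apply: sdel_eq; have -> : i = q * (4*n)%:Z + i' by rewrite -E subrK.
by rewrite modzMDl.
Qed.

Lemma sdel_inj i i' j j' : sdel n i j = sdel n i' j' ->
  (i %% (4*n)%:Z)%Z = (i' %% (4*n)%:Z)%Z /\ j = j'.
Proof.
move=> E; split; last by move: E; rewrite /sdel => -[].
have := congr1 (fun g : sdE n => ((g.1 : nat) : int)) E; rewrite /= (val_sdel i j) (val_sdel i' j').
by rewrite !gez0_abs ?modN_ge0.
Qed.

Lemma sdel_of (g : sdE n) : g = sdel n (g.1 : nat)%:Z g.2.
Proof.
case: g => x j; rewrite /sdel /=; congr (_, _).
apply: val_inj; rewrite /= inordK ?modN_lt // modz_nat /= modn_small //.
move: (ltn_ord x); move: (nat_of_ord x) => y; by rewrite NE.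
Qed.

Definition wt (j : bool) : int := if j then (2 * n)%:Z - 1 else 1.

Lemma sdmul_sdel i j k l :
  sdmul (sdel n i j) (sdel n k l) = sdel n (i + k * wt j) (j (+) l).
Proof.
rewrite /sdmul /sdel /=; congr (_, _); congr inord.
rewrite !inordK ?modN_lt //.
have E : ((if j then (2 * n).-1 else 1%N) : int) = wt j.
  case: j => //=; rewrite /wt predn_int // muln_gt0 hn //.
apply/eqP; rewrite -eqz_nat -modz_nat !PoszD !PoszM E !gez0_abs ?modN_ge0 //.
by rewrite modzDml -modzDmr modzMml modzDmr.
Qed.
End SD.

Section GM.
Variables (F : fieldType) (n : nat).
Local Notation ee := (@ee F (sdE n)).

Lemma sum_delta (T : finType) (P : pred T) (f : T -> F) g :
  \sum_(k | P k) f k * (k == g)%:R = if P g then f g else 0.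
Proof.
rewrite big_mkcond (bigD1 g) //= big1 ?addr0.
  by case: (P g); rewrite ?eqxx ?mulr1.
by move=> k /negPf ->; case: (P k); rewrite ?mulr0.
Qed.

Lemma gmul_right (al : galg F n) g0 u x :
  (forall h y, (sdmul h g0 == y) = (h == sdmul y u)) ->
  gmul al (ee g0) x = al (sdmul x u).
Proof.
move=> E; rewrite ffunE.
under eq_bigr => h _ do (under eq_bigr => k _ do rewrite ffunE; rewrite sum_delta E).
rewrite -big_mkcond /=.
by rewrite (big_pred1 (sdmul x u)).
Qed.

Lemma gmul_left (al : galg F n) g0 u x :
  (forall k y, (sdmul g0 k == y) = (k == sdmul u y)) ->
  gmul (ee g0) al x = al (sdmul u x).
Proof.
move=> E; rewrite ffunE.
under eq_bigr => h _ do (under eq_bigr => k _ do rewrite ffunE mulrC).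
under eq_bigr => h _ do rewrite -mulr_suml.
rewrite sum_delta /=.
by under eq_bigl => k do rewrite E; rewrite (big_pred1 (sdmul u x)).
Qed.

Lemma gmul_ee g h : gmul (ee g) (ee h) = ee (sdmul g h).
Proof.
apply/ffunP => x; rewrite [RHS]ffunE ffunE.
under eq_bigr => h' _ do (under eq_bigr => k _ do rewrite ffunE [X in _ * X]ffunE; rewrite sum_delta).
rewrite -big_mkcond /=.
under eq_bigr => h' _ do rewrite -[(h' == g)%:R]mul1r.
rewrite sum_delta eq_sym; by case: eqP.
Qed.

Lemma gmulBl (x y z : galg F n) : gmul (x - y) z = gmul x z - gmul y z.
Proof.
apply/ffunP => g; rewrite !ffunE -sumrB; apply: eq_bigr => h _.
rewrite -sumrB; apply: eq_bigr => k _; by rewrite !ffunE mulrBl.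
Qed.

Lemma gmulBr (x y z : galg F n) : gmul x (y - z) = gmul x y - gmul x z.
Proof.
apply/ffunP => g; rewrite !ffunE -sumrB; apply: eq_bigr => h _.
rewrite -sumrB; apply: eq_bigr => k _; by rewrite !ffunE mulrBr.
Qed.

Lemma gelE i j : gel F n i j = ee (sdel n i j).
Proof. by []. Qed.

End GM.

Section Conj.
Variables (F : fieldType) (n : nat) (hn : (0 < n)%N).
Local Notation ee := (@ee F (sdE n)).

Lemma sdel_cong' i i' j j' q : j = j' -> i - i' = q * (4 * n)%:Z ->
  sdel n i j = sdel n i' j'.
Proof. by move=> <-; apply: sdel_cong. Qed.

Lemma acent_char (be u : sdE n) (al : galg F n) :
  (forall y, sdmul (sdmul y u) be = y) ->
  (forall y, sdmul (sdmul y be) u = y) ->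
  (forall y, sdmul u (sdmul be y) = y) ->
  (forall y, sdmul be (sdmul u y) = y) ->
  acent (ee be) al <-> (forall h, al (sdmul u (sdmul h be)) = - al h).
Proof.
move=> C1 C2 C3 C4.
have ER h y : (sdmul h be == y) = (h == sdmul y u).
  by apply/eqP/eqP => [<-|->]; rewrite ?C1 ?C2.
have EL k y : (sdmul be k == y) = (k == sdmul u y).
  by apply/eqP/eqP => [<-|->]; rewrite ?C3 ?C4.
rewrite /acent; split.
  move=> E h; have := congr1 (fun f : galg F n => f (sdmul h be)) E.
  by rewrite /= (gmul_right _ _ ER) ffunE (gmul_left _ _ EL) C2 => ->; rewrite opprK.
move=> E; apply/ffunP => x; rewrite (gmul_right _ _ ER) ffunE (gmul_left _ _ EL).
by rewrite -[in RHS](C1 x) E opprK.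
Qed.

Let w := (2 * n)%:Z - 1.

Lemma c1E i j : sdmul (sdel n 0 true) (sdmul (sdel n i j) (sdel n 0 true)) = sdel n (i * w) j.
Proof.
rewrite !sdmul_sdel //; apply: (sdel_cong' (q := 0)); first by case: j.
rewrite /wt /w; lia.
Qed.

Lemma c2E i j : sdmul (sdel n (1 - (2 * n)%:Z) true) (sdmul (sdel n i j) (sdel n 1 true)) =
  sdel n (if j then (i - 1) * w + 1 else i * w) j.
Proof.
rewrite !sdmul_sdel //; case: j.
  by apply: (sdel_cong' (q := n%:Z - 1)) => //; rewrite /wt /w; lia.
by apply: (sdel_cong' (q := 0)) => //; rewrite /wt /w; lia.
Qed.

End Conj.

Section Arith.
Variables (n : nat) (hn : (0 < n)%N).
Local Notation M z := ((z %% (4 * n)%:Z)%Z).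

Lemma Mcong a b q : a - b = q * (4 * n)%:Z -> M a = M b.
Proof.
move=> E; have -> : a = q * (4*n)%:Z + b by rewrite -E subrK.
by rewrite modzMDl.
Qed.

Lemma Mq a b : M a = M b -> exists q, a - b = q * (4 * n)%:Z.
Proof.
move=> E; exists ((a %/ (4*n)%:Z)%Z - (b %/ (4*n)%:Z)%Z).
have ha := divz_eq a (4*n)%:Z; have hb := divz_eq b (4*n)%:Z; rewrite E in ha. lia.
Qed.

Lemma Msame a b : M a = M b ->
  (a = b \/ (4 * n)%:Z <= a - b \/ a - b <= - (4 * n)%:Z) /\ exists Q, a - b = 4 * Q.
Proof.
move=> /Mq [q E]; split; last by exists (q * n%:Z); rewrite E; lia.
have P := Npos hn.
have [q0|[q1|q2]] : q = 0 \/ 1 <= q \/ q <= -1 by lia.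
- by left; move: E; rewrite q0 mul0r; lia.
- by right; left; have := ler_pM ler01 (ltW P) q1 (lexx _); lia.
- right; right; have q3 : 1 <= - q by lia.
  by have := ler_pM ler01 (ltW P) q3 (lexx _); rewrite mulNr; lia.
Qed.

Lemma MaddL a b c : M a = M b -> M (c + a) = M (c + b).
Proof. by move=> E; rewrite -modzDmr E modzDmr. Qed.

Lemma MmulR a b c : M a = M b -> M (a * c) = M (b * c).
Proof. by move=> E; rewrite -modzMml E modzMml. Qed.

Lemma half_fact : (n = 2 * n./2 \/ n = 2 * n./2 + 1)%N.
Proof. by have := odd_double_half n; case: (odd n) => /= <-; rewrite -muln2; lia. Qed.

Lemma ev_mem (k : int) : k \in even_range n -> 1 <= k /\ k < n%:Z.
Proof. by move=> /mapP[t]; rewrite mem_iota => /andP[h1 h2] ->; lia. Qed.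

Lemma od_mem (k : int) : k \in odd_range n -> - (n./2)%:Z <= k /\ k < (n./2)%:Z.
Proof. by move=> /mapP[t]; rewrite mem_iota => /andP[h1 h2] ->; lia. Qed.

Lemma mem_ev (k : int) : 1 <= k -> k < n%:Z -> k \in even_range n.
Proof.
move=> h1 h2; apply/mapP; exists (absz k); last by rewrite gez0_abs //; lia.
rewrite mem_iota; lia.
Qed.

Lemma mem_od (k : int) : - (n./2)%:Z <= k -> k < (n./2)%:Z -> k \in odd_range n.
Proof.
move=> h1 h2; apply/mapP; exists (absz (k + (n./2)%:Z)); last by rewrite gez0_abs; lia.
rewrite mem_iota; lia.
Qed.

End Arith.

Lemma cover_nat (n : nat) (hn : (0 < n)%N) (x : nat) : (x < 4 * n)%N ->
  let M z := ((z %% (4 * n)%:Z)%Z) in let w := (2 * n)%:Z - 1 in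
  M (x%:Z * w) = M x%:Z \/
  (exists2 k, k \in even_range n & M x%:Z = M (2 * k)) \/
  (exists2 k, k \in even_range n & M (x%:Z * w) = M (2 * k)) \/
  (exists2 k, k \in odd_range n & M x%:Z = M (2 * k + 1)) \/
  (exists2 k, k \in odd_range n & M (x%:Z * w) = M (2 * k + 1)).
Proof.
move=> hx M w; have hm := half_fact hn.
have memo := @mem_od n hn; have meme := @mem_ev n hn.
move: memo hm; move Em: (n./2) => m memo hm.
have [t [Ex|Ex]] : exists t, (x = 2 * t \/ x = 2 * t + 1)%N.
  by exists x./2; have := odd_double_half x; case: (odd x) => /= <-; [right|left]; lia.
- have [t0|[tn|[t1|t2]]] : (t = 0 \/ t = n \/ (1 <= t < n) \/ (n < t < 2 * n))%N by lia.
  + by left; apply: (Mcong (q := 0)); rewrite /w Ex t0; lia.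
  + by left; apply: (Mcong (q := n%:Z - 1)); rewrite /w Ex tn; lia.
  + right; left; exists t%:Z; first by apply: meme; lia.
    by apply: (Mcong (q := 0)); rewrite Ex; lia.
  + right; right; left; exists ((2 * n)%:Z - t%:Z); first by apply: meme; lia.
    by apply: (Mcong (q := t%:Z - 1)); rewrite /w Ex; lia.
- have [t1|[t2|[t3|[t4|t5]]]] : (t < m \/ 2 * n - m <= t \/ (n - m <= t /\ t < n + m)
     \/ (n = 2 * m + 1 /\ t = m) \/ (n = 2 * m + 1 /\ t = 3 * m + 1))%N by lia.
  + right; right; right; left; exists t%:Z; first by apply: memo; lia.
    by apply: (Mcong (q := 0)); rewrite Ex; lia.
  + right; right; right; left; exists (t%:Z - (2 * n)%:Z); first by apply: memo; lia.
    by apply: (Mcong (q := 1)); rewrite Ex; lia.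
  + right; right; right; right; exists (n%:Z - t%:Z - 1); first by apply: memo; lia.
    by apply: (Mcong (q := t%:Z)); rewrite /w Ex; lia.
  + left; apply: (Mcong (q := m%:Z)); rewrite /w Ex; case: t4 => -> ->; lia.
  + left; apply: (Mcong (q := 3 * m%:Z)); rewrite /w Ex; case: t5 => -> ->; lia.
Qed.

Lemma cover_int (n : nat) (hn : (0 < n)%N) (y : int) :
  let M z := ((z %% (4 * n)%:Z)%Z) in let w := (2 * n)%:Z - 1 in
  M (y * w) = M y \/
  (exists2 k, k \in even_range n & M y = M (2 * k)) \/
  (exists2 k, k \in even_range n & M (y * w) = M (2 * k)) \/
  (exists2 k, k \in odd_range n & M y = M (2 * k + 1)) \/
  (exists2 k, k \in odd_range n & M (y * w) = M (2 * k + 1)).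
Proof.
move=> M w.
have hx : (absz (M y) < 4 * n)%N by have := modN_lt hn y; rewrite NE.
have E1 : M (absz (M y))%:Z = M y by rewrite gez0_abs ?modN_ge0 // /M modz_mod.
have E2 : M ((absz (M y))%:Z * w) = M (y * w) by apply: MmulR.
by have := cover_nat hn hx; rewrite /= -/w; rewrite /M in E1 E2 *; rewrite E1 E2.
Qed.

Lemma two_neq0 (F : fieldType) :
  [pchar F] =i pred0 \/ (exists p : nat, [/\ prime p, odd p & p \in [pchar F]]) ->
  (2 != 0 :> F).
Proof.
case=> [H|[p [pp op pc]]]; first by have := (pcharf0P _).1 H 2; rewrite /= => ->.
apply/negP => /eqP h2; have : 2%N \in [pchar F] by rewrite inE /= h2 eqxx.
by rewrite (pcharf_eq pc) inE => /eqP p2; rewrite -p2 in op.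
Qed.

Section Main.
Variables (F : fieldType) (n : nat) (hn : (0 < n)%N).
Local Notation ee := (@ee F (sdE n)).

Definition PP : seq (nat * int) :=
  [seq (0%N, k) | k <- even_range n] ++ [seq (1%N, k) | k <- even_range n] ++
  [seq (2%N, k) | k <- odd_range n] ++ [seq (3%N, k) | k <- odd_range n].

Lemma uniq_ev : uniq (even_range n).
Proof. by rewrite map_inj_uniq ?iota_uniq // => a b []. Qed.

Lemma uniq_od : uniq (odd_range n).
Proof. by rewrite map_inj_uniq ?iota_uniq // => a b /addIr []. Qed.

Lemma uniq_PP : uniq PP.
Proof.
have pi (i : nat) : injective (fun k : int => (i, k)) by move=> a b [].
rewrite !cat_uniq !(map_inj_uniq (pi _)) uniq_ev uniq_od /=.
rewrite andbT; apply/and3P; split; apply/hasPn => x;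
  rewrite ?mem_cat => /=; try (case/orP; [|try case/orP]);
  move=> /mapP[k _ ->]; apply/negP => /mapP[k0 _]; by case.
Qed.

Lemma PP_mem i k : (i, k) \in PP ->
  [\/ i = 0%N /\ k \in even_range n, i = 1%N /\ k \in even_range n,
      i = 2%N /\ k \in odd_range n | i = 3%N /\ k \in odd_range n].
Proof.
rewrite !mem_cat => /orP[|/orP[|/orP[]]] /mapP[k' kin [-> ->]].
- by constructor 1.
- by constructor 2.
- by constructor 3.
- by constructor 4.
Qed.

End Main.

Section Main2.
Variables (F : fieldType) (n : nat) (hn : (0 < n)%N).
Local Notation ee := (@ee F (sdE n)).

Definition sel {T} (i : nat) (a b c d : T) :=
  match i with 0 => a | 1 => b | 2 => c | _ => d end.

Definition g1 (p : nat * int) : sdE n :=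
  sel p.1 (sdel n (2 * p.2) false) (sdel n (2 * p.2) true)
          (sdel n (2 * p.2 + 1) false) (sdel n (2 * p.2 + 1) true).
Definition g1' (p : nat * int) : sdE n :=
  sel p.1 (sdel n (- (2 * p.2)) false) (sdel n (- (2 * p.2)) true)
          (sdel n ((2 * n)%:Z - (2 * p.2 + 1)) false)
          (sdel n ((2 * n)%:Z - (2 * p.2 + 1)) true).
Definition g2 (p : nat * int) : sdE n :=
  sel p.1 (sdel n (2 * p.2) false) (sdel n (1 + 2 * p.2) true)
          (sdel n (2 * p.2 + 1) false) (sdel n (1 + (2 * p.2 + 1)) true).
Definition g2' (p : nat * int) : sdE n :=
  sel p.1 (sdel n (- (2 * p.2)) false) (sdel n (1 - 2 * p.2) true)
          (sdel n ((2 * n)%:Z - (2 * p.2 + 1)) false)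
          (sdel n (1 + ((2 * n)%:Z - (2 * p.2 + 1))) true).

Ltac pcase := move=> [i k] [i' k'] /PP_mem [[-> /(ev_mem hn) ?]|[-> /(ev_mem hn) ?]|[-> /(od_mem hn) ?]|[-> /(od_mem hn) ?]]
  /PP_mem [[-> /(ev_mem hn) ?]|[-> /(ev_mem hn) ?]|[-> /(od_mem hn) ?]|[-> /(od_mem hn) ?]] /=;
  move=> /(sdel_inj hn) [/(Msame hn) [? [? ?]] ?]; have ? := half_fact hn; simpl in *; try discriminate.

Lemma g1_inj : {in PP n &, injective g1}.
Proof. pcase; (congr pair; lia) || (exfalso; lia). Qed.

Lemma g2_inj : {in PP n &, injective g2}.
Proof. pcase; (congr pair; lia) || (exfalso; lia). Qed.

Lemma g1_H2 p p' : p \in PP n -> p' \in PP n -> g1 p <> g1' p'.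
Proof. move: p p'; pcase; lia. Qed.

Lemma g2_H2 p p' : p \in PP n -> p' \in PP n -> g2 p <> g2' p'.
Proof. move: p p'; pcase; lia. Qed.

End Main2.

Section Main3.
Variables (F : fieldType) (n : nat) (hn : (0 < n)%N).

Definition c1 (h : sdE n) := sdmul (sdel n 0 true) (sdmul h (sdel n 0 true)).
Definition c2 (h : sdE n) := sdmul (sdel n (1 - (2 * n)%:Z) true) (sdmul h (sdel n 1 true)).

Lemma sdel_shift a b a' b' c j :
  (a %% (4 * n)%:Z)%Z = (b %% (4 * n)%:Z)%Z -> a' - a = c -> b' - b = c ->
  sdel n a' j = sdel n b' j.
Proof.
move=> E ha hb; apply: sdel_eq.
have -> : a' = c + a by rewrite -ha subrK.
have -> : b' = c + b by rewrite -hb subrK.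
exact: MaddL.
Qed.

Ltac canc q0 q1 := let y := fresh "y" in let x := fresh "x" in let j := fresh "j" in
  intro y; rewrite (sdel_of hn y); generalize (nat_of_ord y.1) (y.2); intros x j; case: j;
  rewrite !sdmul_sdel //; [apply: (sdel_cong' (q := q1 x)) | apply: (sdel_cong' (q := q0 x))] => //;
  rewrite /wt /=; lia.

Lemma c1_C1 : forall y, sdmul (sdmul y (sdel n 0 true)) (sdel n 0 true) = y.
Proof. canc (fun x : nat => 0 : int) (fun x : nat => 0 : int). Qed.
Lemma c1_C3 : forall y, sdmul (sdel n 0 true) (sdmul (sdel n 0 true) y) = y.
Proof. canc (fun x : nat => (x%:Z * (n%:Z - 1)) : int) (fun x : nat => (x%:Z * (n%:Z - 1)) : int). Qed.
Lemma c2_C1 : forall y, sdmul (sdmul y (sdel n (1 - (2 * n)%:Z) true)) (sdel n 1 true) = y.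
Proof. canc (fun x : nat => 0 : int) (fun x : nat => (1 - n%:Z) : int). Qed.
Lemma c2_C2 : forall y, sdmul (sdmul y (sdel n 1 true)) (sdel n (1 - (2 * n)%:Z) true) = y.
Proof. canc (fun x : nat => (1 - n%:Z) : int) (fun x : nat => 0 : int). Qed.
Lemma c2_C3 : forall y, sdmul (sdel n (1 - (2 * n)%:Z) true) (sdmul (sdel n 1 true) y) = y.
Proof. canc (fun x : nat => (x%:Z * (n%:Z - 1)) : int) (fun x : nat => (x%:Z * (n%:Z - 1)) : int). Qed.
Lemma c2_C4 : forall y, sdmul (sdel n 1 true) (sdmul (sdel n (1 - (2 * n)%:Z) true) y) = y.
Proof. canc (fun x : nat => ((x%:Z - 1) * (n%:Z - 1)) : int) (fun x : nat => ((x%:Z - 1) * (n%:Z - 1)) : int). Qed.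

Lemma c1K : involutive c1.
Proof.
move=> y; rewrite (sdel_of hn y); move: (y.1 : nat) (y.2) => x j.
rewrite /c1 !c1E //; apply: (sdel_cong' (q := x%:Z * (n%:Z - 1))) => //; lia.
Qed.

Lemma c2K : involutive c2.
Proof.
move=> y; rewrite (sdel_of hn y); move: (y.1 : nat) (y.2) => x [].
  rewrite /c2 !c2E //; apply: (sdel_cong' (q := (x%:Z - 1) * (n%:Z - 1))) => //; lia.
rewrite /c2 !c2E //; apply: (sdel_cong' (q := x%:Z * (n%:Z - 1))) => //; lia.
Qed.

Lemma c1g p : c1 (g1 n p) = g1' n p.
Proof.
case: p => [[|[|[|i]]] k]; rewrite /c1 /g1 /g1' /= c1E //;
  apply: (sdel_cong' (q := k)) => //; lia.
Qed.

Lemma c2g p : c2 (g2 n p) = g2' n p.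
Proof.
case: p => [[|[|[|i]]] k]; rewrite /c2 /g2 /g2' /= c2E //;
  apply: (sdel_cong' (q := k)) => //; lia.
Qed.

Lemma PP0 k : k \in even_range n -> (0%N, k) \in PP n.
Proof. by move=> kin; rewrite !mem_cat (map_f (fun k => (0%N, k))). Qed.
Lemma PP1 k : k \in even_range n -> (1%N, k) \in PP n.
Proof. by move=> kin; rewrite !mem_cat (map_f (fun k => (1%N, k))) ?orbT. Qed.
Lemma PP2 k : k \in odd_range n -> (2%N, k) \in PP n.
Proof. by move=> kin; rewrite !mem_cat (map_f (fun k => (2%N, k))) ?orbT. Qed.
Lemma PP3 k : k \in odd_range n -> (3%N, k) \in PP n.
Proof. by move=> kin; rewrite !mem_cat (map_f (fun k => (3%N, k))) ?orbT. Qed.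

End Main3.

Section Main4.
Variables (n : nat) (hn : (0 < n)%N).

Ltac endc := by [].

Lemma cov1 h : c1 h != h -> (h \in map (g1 n) (PP n)) || (c1 h \in map (g1 n) (PP n)).
Proof.
rewrite (sdel_of hn h); move: (nat_of_ord h.1) (h.2) => x j.
rewrite /c1 c1E //.
have := cover_int hn x; rewrite /=.
case=> [E|[[k kin E]|[[k kin E]|[[k kin E]|[k kin E]]]]].
- by rewrite (sdel_eq _ E) eqxx.
- move=> _; rewrite (sdel_eq _ E); apply/orP; left; apply/mapP.
  by case: j; [exists (1%N, k); [exact: PP1|] | exists (0%N, k); [exact: PP0|]].
- move=> _; rewrite (sdel_eq _ E); apply/orP; right; apply/mapP.
  by case: j; [exists (1%N, k); [exact: PP1|] | exists (0%N, k); [exact: PP0|]].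
- move=> _; rewrite (sdel_eq _ E); apply/orP; left; apply/mapP.
  by case: j; [exists (3%N, k); [exact: PP3|] | exists (2%N, k); [exact: PP2|]].
- move=> _; rewrite (sdel_eq _ E); apply/orP; right; apply/mapP.
  by case: j; [exists (3%N, k); [exact: PP3|] | exists (2%N, k); [exact: PP2|]].
Qed.

Lemma cov2 h : c2 h != h -> (h \in map (g2 n) (PP n)) || (c2 h \in map (g2 n) (PP n)).
Proof.
rewrite (sdel_of hn h); move: (nat_of_ord h.1) (h.2) => x [].
- rewrite /c2 c2E //=.
  have := cover_int hn (x%:Z - 1); rewrite /=.
  case=> [E|[[k kin E]|[[k kin E]|[[k kin E]|[k kin E]]]]].
  + have -> : sdel n ((x%:Z - 1) * ((2 * n)%:Z - 1) + 1) true = sdel n x true.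
      by apply: (sdel_shift (c := 1) _ E); lia.
    by rewrite eqxx.
  + have -> : sdel n x true = sdel n (1 + 2 * k) true.
      by apply: (sdel_shift (c := 1) _ E); lia.
    by move=> _; apply/orP; left; apply/mapP; exists (1%N, k); [exact: PP1|].
  + have -> : sdel n ((x%:Z - 1) * ((2 * n)%:Z - 1) + 1) true = sdel n (1 + 2 * k) true.
      by apply: (sdel_shift (c := 1) _ E); lia.
    by move=> _; apply/orP; right; apply/mapP; exists (1%N, k); [exact: PP1|].
  + have -> : sdel n x true = sdel n (1 + (2 * k + 1)) true.
      by apply: (sdel_shift (c := 1) _ E); lia.
    by move=> _; apply/orP; left; apply/mapP; exists (3%N, k); [exact: PP3|].
  + have -> : sdel n ((x%:Z - 1) * ((2 * n)%:Z - 1) + 1) true = sdel n (1 + (2 * k + 1)) true.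
      by apply: (sdel_shift (c := 1) _ E); lia.
    by move=> _; apply/orP; right; apply/mapP; exists (3%N, k); [exact: PP3|].
- rewrite /c2 c2E //=.
  have := cover_int hn x; rewrite /=.
  case=> [E|[[k kin E]|[[k kin E]|[[k kin E]|[k kin E]]]]].
  + by rewrite (sdel_eq _ E) eqxx.
  + move=> _; rewrite (sdel_eq _ E); apply/orP; left; apply/mapP.
    by exists (0%N, k); [exact: PP0|].
  + move=> _; rewrite (sdel_eq _ E); apply/orP; right; apply/mapP.
    by exists (0%N, k); [exact: PP0|].
  + move=> _; rewrite (sdel_eq _ E); apply/orP; left; apply/mapP.
    by exists (2%N, k); [exact: PP2|].
  + move=> _; rewrite (sdel_eq _ E); apply/orP; right; apply/mapP.
    by exists (2%N, k); [exact: PP2|].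
Qed.

End Main4.

Theorem lemma5p2 (F : fieldType) (n : nat) (hn : (0 < n)%N)
  (hchar : [pchar F] =i pred0 \/ (exists p : nat, [/\ prime p, odd p & p \in [pchar F]])) :
  let a := gel F n 1 false in
  let b := gel F n 0 true in
  is_acent_basis b
    ([seq ev_elt F n k | k <- even_range n] ++
     [seq gmul (ev_elt F n k) b | k <- even_range n] ++
     [seq od_elt F n k | k <- odd_range n] ++
     [seq gmul (od_elt F n k) b | k <- odd_range n])
  /\
  is_acent_basis (gmul a b)
    ([seq ev_elt F n k | k <- even_range n] ++
     [seq gmul a (gmul (ev_elt F n k) b) | k <- even_range n] ++
     [seq od_elt F n k | k <- odd_range n] ++
     [seq gmul a (gmul (od_elt F n k) b) | k <- odd_range n]).
Proof.
move=> a b; have two := two_neq0 hchar.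
have Eab : gmul a b = ee F (sdel n 1 true).
  rewrite /a /b !gelE gmul_ee sdmul_sdel //.
split.
- have EL : [seq ev_elt F n k | k <- even_range n] ++
     [seq gmul (ev_elt F n k) b | k <- even_range n] ++
     [seq od_elt F n k | k <- odd_range n] ++
     [seq gmul (od_elt F n k) b | k <- odd_range n]
     = [seq ee F r - ee F (c1 r) | r <- map (g1 n) (PP n)].
    rewrite -map_comp /PP !map_cat -!map_comp.
    congr (_ ++ _ ++ _ ++ _); apply: eq_map => k /=; rewrite c1g //.
    1,2: rewrite /b; (try rewrite /ev_elt); (try rewrite /od_elt); rewrite (@gmulBl F n) !(@gelE F n) !(@gmul_ee F n) !sdmul_sdel //.
    1,2: by congr (ee F _ - ee F _); apply: (sdel_cong' (q := 0)) => //=; lia.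
  rewrite EL.
  have uR : uniq (map (g1 n) (PP n)).
    by rewrite map_inj_in_uniq ?uniq_PP //; exact: g1_inj.
  have H2 : forall r r', r \in map (g1 n) (PP n) -> r' \in map (g1 n) (PP n) -> r != c1 r'.
    move=> r r' /mapP[p pin ->] /mapP[p' p'in ->]; rewrite c1g //.
    by apply/eqP; exact: g1_H2.
  have [fr sp] := @anti_basis F (sdE n) (@c1 n) (c1K hn) two _ uR H2 (cov1 hn).
  split => // al; rewrite sp; apply: iff_sym.
  exact: (acent_char _ (c1_C1 hn) (c1_C1 hn) (c1_C3 hn) (c1_C3 hn)).
- have EL : [seq ev_elt F n k | k <- even_range n] ++
     [seq gmul a (gmul (ev_elt F n k) b) | k <- even_range n] ++
     [seq od_elt F n k | k <- odd_range n] ++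
     [seq gmul a (gmul (od_elt F n k) b) | k <- odd_range n]
     = [seq ee F r - ee F (c2 r) | r <- map (g2 n) (PP n)].
    rewrite -map_comp /PP !map_cat -!map_comp.
    congr (_ ++ _ ++ _ ++ _); apply: eq_map => k /=; rewrite c2g //.
    1,2: rewrite /a /b; (try rewrite /ev_elt); (try rewrite /od_elt); rewrite (@gmulBl F n) (@gmulBr F n) !(@gelE F n) !(@gmul_ee F n) !sdmul_sdel //.
    1,2: by congr (ee F _ - ee F _); apply: (sdel_cong' (q := 0)) => //=; lia.
  rewrite EL Eab.
  have uR : uniq (map (g2 n) (PP n)).
    by rewrite map_inj_in_uniq ?uniq_PP //; exact: g2_inj.
  have H2 : forall r r', r \in map (g2 n) (PP n) -> r' \in map (g2 n) (PP n) -> r != c2 r'.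
    move=> r r' /mapP[p pin ->] /mapP[p' p'in ->]; rewrite c2g //.
    by apply/eqP; exact: g2_H2.
  have [fr sp] := @anti_basis F (sdE n) (@c2 n) (c2K hn) two _ uR H2 (cov2 hn).
  split => // al; rewrite sp; apply: iff_sym.
  exact: (acent_char _ (c2_C1 hn) (c2_C2 hn) (c2_C3 hn) (c2_C4 hn)).
Qed.
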